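(* An SVN $\mathfrak{g}$ with sufficient storage and sufficient budget under the Single-Objective Framework is bilaterally stable if and only if every agent has backup partnerships with all other agents, i.e. $\mathfrak{g}$ is the complete network.
   Context: $\mathfrak{g}$ is a simple undirected graph on $N$ agents, and $\eta_i(\mathfrak{g})$ is the degree of $i$. The utility is $u_i(\mathfrak{g})=\beta(1-\lambda^{\eta_i(\mathfrak{g})})$ with $\beta,\lambda\in(0,1)$. Sufficient resources means: - agent $i$'s storage $s_i$ satisfies $s_i\ge\sum_{j\ne i}d_j$, where $d_j$ is agent $j$'s data size; - budget $b_i\ge c(N-1)$, where $c$ is the per-link cost. Remaining storage is $RS_i=s_i-\sum_{j\text{ neighbour of }i}d_j$ and remaining budget is $RB_i=b_i-c\,\eta_i(\mathfrak{g})$. $\mathfrak{g}$ is bilaterally stable if both of the following hold. 1. For every link $\langle ij\rangle$: if $u_i(\mathfrak{g}-\langle ij\rangle)>u_i(\mathfrak{g})$, then $u_j(\mathfrak{g}-\langle ij\rangle)<u_j(\mathfrak{g})$. 2. For every non-link $\langle ij\rangle$: if $u_i(\mathfrak{g}+\langle ij\rangle)>u_i(\mathfrak{g})$ and $RS_j\ge d_i$ and $RB_i\ge c$, then $u_j(\mathfrak{g}+\langle ij\rangle)<u_j(\mathfrak{g})$ or $RS_i<d_j$ or $RB_j<c$. *)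

(* Defs.v *)
From mathcomp Require Import all_boot all_order all_algebra.
Set Implicit Arguments. Unset Strict Implicit. Unset Printing Implicit Defensive.
Import Order.TTheory GRing.Theory Num.Theory.
Local Open Scope ring_scope.

(* Agents are the elements of a finite type T (N = #|T|).
   A network is a simple undirected graph, i.e. a symmetric irreflexive
   boolean relation on T. *)

Definition simple_graph (T : finType) (g : rel T) : Prop :=
  (forall i, ~~ g i i) /\ (forall i j, g i j = g j i).

Definition deg (T : finType) (g : rel T) (i : T) : nat := #|[pred j | g i j]|.

Definition add_link (T : finType) (g : rel T) (i j : T) : rel T :=
  fun x y => g x y || ((x == i) && (y == j)) || ((x == j) && (y == i)).
Definition del_link (T : finType) (g : rel T) (i j : T) : rel T :=
  fun x y => g x y && ~~ (((x == i) && (y == j)) || ((x == j) && (y == i))).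

Definition utility (R : realFieldType) (beta lambda : R) (T : finType)
  (g : rel T) (i : T) : R := beta * (1 - lambda ^+ deg g i).

Definition RS (R : realFieldType) (T : finType) (s d : T -> R) (g : rel T)
  (i : T) : R := s i - \sum_(j | g i j) d j.
Definition RB (R : realFieldType) (T : finType) (b : T -> R) (c : R)
  (g : rel T) (i : T) : R := b i - c * (deg g i)%:R.

Definition sufficient_storage (R : realFieldType) (T : finType) (s d : T -> R)
  : Prop := forall i, \sum_(j | j != i) d j <= s i.
Definition sufficient_budget (R : realFieldType) (T : finType) (b : T -> R)
  (c : R) : Prop := forall i : T, c * (#|T| - 1)%N%:R <= b i.

Definition bilaterally_stable (R : realFieldType) (beta lambda : R)
  (T : finType) (s d b : T -> R) (c : R) (g : rel T) : Prop :=
  let u := @utility R beta lambda T in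
  (forall i j, g i j ->
     u (del_link g i j) i > u g i -> u (del_link g i j) j < u g j) /\
  (forall i j, i != j -> ~~ g i j ->
     (u (add_link g i j) i > u g i /\ RS s d g j >= d i /\ RB b c g i >= c) ->
     (u (add_link g i j) j < u g j \/ RS s d g i < d j \/ RB b c g j < c)).

Definition complete_network (T : finType) (g : rel T) : Prop :=
  forall i j : T, i != j -> g i j.

(* Main.v *)
Require Import Defs.
From mathcomp Require Import all_boot all_order all_algebra.
Import Order.TTheory GRing.Theory Num.Theory.
Local Open Scope ring_scope.

Lemma util_lt (R : realFieldType) (beta lambda : R) (T : finType) (g g' : rel T) i :
  0 < beta -> 0 < lambda < 1 -> (deg g i < deg g' i)%N ->
  utility beta lambda g i < utility beta lambda g' i.
Proof.
move=> hb /andP[l0 l1] hd; rewrite /utility ltr_pM2l // ltrD2l ltrN2.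
by rewrite ltr_iXn2l.
Qed.

Lemma util_le (R : realFieldType) (beta lambda : R) (T : finType) (g g' : rel T) i :
  0 < beta -> 0 < lambda < 1 -> (deg g' i <= deg g i)%N ->
  utility beta lambda g' i <= utility beta lambda g i.
Proof.
move=> hb /andP[l0 l1] hd; rewrite /utility ler_pM2l // lerD2l lerN2.
by rewrite ler_iXn2l.
Qed.

Theorem corollary2 (R : realFieldType) (beta lambda : R) (T : finType)
  (s d b : T -> R) (c : R) (g : rel T) :
  0 < beta < 1 -> 0 < lambda < 1 ->
  (forall j, 0 <= d j) -> 0 <= c ->
  simple_graph g ->
  sufficient_storage s d -> sufficient_budget b c ->
  bilaterally_stable beta lambda s d b c g <-> complete_network g.
Proof.
move=> /andP[b0 _] hl hd hc [irr sym] hS hB; split.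
- move=> [_ H2] i j ij; apply/negPn/negP => nij.
  have degadd : forall x y, x != y -> ~~ g x y ->
      (deg g x < deg (add_link g x y) x)%N.
    move=> x y xy nxy; apply: proper_card; apply/properP; split.
      by apply/subsetP => k; rewrite !inE /add_link => ->.
    exists y; first by rewrite inE /add_link !eqxx orbT.
    by rewrite inE.
  have degle : forall x y, x != y -> ~~ g x y -> ((deg g x).+1 <= #|T| - 1)%N.
    move=> x y xy nxy.
    have : (deg g x < #|predC1 x|)%N.
      apply: proper_card; apply/properP; split.
        apply/subsetP => k; rewrite !inE => gk.
        by apply/eqP => kx; move: gk; rewrite kx (negbTE (irr x)).
      by exists y; rewrite !inE // eq_sym.
    by rewrite cardC1 subn1.
  have RBok : forall x y, x != y -> ~~ g x y -> c <= RB b c g x.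
    move=> x y xy nxy; rewrite /RB lerBrDr.
    apply: le_trans (hB x).
    have -> : c + c * (deg g x)%:R = c * ((deg g x).+1)%:R by rewrite -addn1 natrD mulrDr mulr1 addrC.
    by rewrite ler_wpM2l // ler_nat; apply: degle xy nxy.
  have RSok : forall x y, x != y -> ~~ g x y -> d y <= RS s d g x.
    move=> x y xy nxy; rewrite /RS lerBrDr.
    apply: le_trans (hS x).
    rewrite [X in _ <= X](bigD1 y) /=; last by rewrite eq_sym.
    rewrite lerD2l [X in _ <= X](bigID (g x)) /= -[X in X <= _]addr0.
    apply: lerD; last by apply: sumr_ge0 => k _; apply: hd.
    rewrite le_eqVlt; apply/orP; left; apply/eqP; apply: eq_bigl => k.
    case gk: (g x k); rewrite ?andbF ?andbT //.
    apply/esym/andP; split; apply/eqP => e; subst k.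
      by rewrite (negbTE (irr x)) in gk.
    by rewrite gk in nxy.
  have nji : ~~ g j i by rewrite sym.
  have ji : j != i by rewrite eq_sym.
  have addsym : forall x y, add_link g i j x y = add_link g j i x y.
    by move=> x y; rewrite /add_link orbAC.
  have uj : utility beta lambda g j < utility beta lambda (add_link g i j) j.
    apply: util_lt => //.
    have -> : deg (add_link g i j) j = deg (add_link g j i) j.
      by apply: eq_card => k; rewrite !inE addsym.
    exact: degadd.
  case: (H2 i j ij nij).
  + split; first by apply: util_lt => //; apply: degadd.
    by split; [apply: (RSok j i) | apply: (RBok i j)].
  + by move=> h; move: (lt_trans h uj); rewrite ltxx.
  + case; rewrite ltNge.
    * by move/negP; apply; apply: (RSok i j).
    * by move/negP; apply; apply: (RBok j i).
- move=> cg; split.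
  + move=> i j gij h; exfalso; move: h; apply/negP; rewrite -leNgt.
    apply: util_le => //; apply: subset_leq_card; apply/subsetP => k.
    by rewrite !inE /del_link => /andP[].
  + move=> i j ij nij; by rewrite cg in nij.
Qed.
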